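(* The map $\Upsilon$ is a bijection from $\mathcal{F}$ to $\mathcal{C}^I$, with inverse given by $\Gamma$.
   Context: Fix $I\in\mathbb{N}$. $\mathcal{C}=\{f\in C(\mathbb{R}_+,\mathbb{R}_+):f(0)=0,f\text{ non-decreasing}\}$, $\mathcal{C}^\uparrow=\{f\in\mathcal{C}:f\text{ strictly increasing},\lim_{u\to\infty}f(u)=\infty\}$. For $\psi\in\mathcal{C}^I$, $\phi_i(u):=u-\sum_{j=1}^I2(i\wedge j)\psi_j(u)$; $\mathcal{F}:=\{\psi\in\mathcal{C}^I:\phi_I\in\mathcal{C}^\uparrow\}$; for $\psi\in\mathcal{F}$ each $\phi_i\in\mathcal{C}^\uparrow$ and $\Upsilon(\psi):=(\psi_i\circ\phi_i^{-1})_{i=1}^I$. For $\bar\psi\in\mathcal{C}^I$, $\gamma_I(z):=z$, $\gamma_i(z):=z+\sum_{j>i}2(j-i)\bar\psi_j(\gamma_j(z))$ for $i=I-1,\dots,0$ (each in $\mathcal{C}^\uparrow$), and $\Gamma(\bar\psi):=(\bar\psi_i\circ\gamma_i\circ\gamma_0^{-1})_{i=1}^I$. *)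

(* Defs.v *)
(* concrete reals R. Functions on R_+ are represented as
   R -> R; only their values on [0, +oo) matter. Indices i range over 1..I. *)
From Stdlib Require Import Reals Lra Lia ClassicalEpsilon.
Open Scope R_scope.

Fixpoint sum1 (n : nat) (f : nat -> R) : R :=
  match n with
  | O => 0
  | S m => sum1 m f + f (S m)
  end.

Definition cont_Rplus (f : R -> R) : Prop :=
  forall x, 0 <= x -> forall eps, 0 < eps ->
    exists delta, 0 < delta /\
      forall y, 0 <= y -> Rabs (y - x) < delta -> Rabs (f y - f x) < eps.

Definition inC (f : R -> R) : Prop :=
  cont_Rplus f /\ (forall x, 0 <= x -> 0 <= f x) /\ f 0 = 0 /\
  (forall x y, 0 <= x -> x <= y -> f x <= f y).

Definition inCup (f : R -> R) : Prop :=
  inC f /\ (forall x y, 0 <= x -> x < y -> f x < f y) /\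
  (forall M, exists N, forall u, N <= u -> M < f u).

Definition invR (f : R -> R) (u : R) : R :=
  epsilon (inhabits 0) (fun v => 0 <= v /\ f v = u).

(* families psi = (psi_1, ..., psi_I) are functions nat -> (R -> R),
   only the indices 1..I matter *)
Definition inCI (I : nat) (psi : nat -> R -> R) : Prop :=
  forall i, (1 <= i <= I)%nat -> inC (psi i).

Definition eqCI (I : nat) (p q : nat -> R -> R) : Prop :=
  forall i, (1 <= i <= I)%nat -> forall u, 0 <= u -> p i u = q i u.

Definition phi (I : nat) (psi : nat -> R -> R) (i : nat) (u : R) : R :=
  u - sum1 I (fun j => 2 * INR (Nat.min i j) * psi j u).

Definition inF (I : nat) (psi : nat -> R -> R) : Prop :=
  inCI I psi /\ inCup (phi I psi I).

Definition Upsilon (I : nat) (psi : nat -> R -> R) : nat -> R -> R :=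
  fun i u => psi i (invR (phi I psi i) u).

(* gamma_I(z) = z, gamma_i(z) = z + sum_{j=i+1}^I 2 (j - i) pb_j(gamma_j(z)),
   computed by downward recursion with fuel (fuel I - i suffices exactly;
   the sum for i = I is empty). *)
Fixpoint gamma_f (I : nat) (pb : nat -> R -> R) (fuel i : nat) (z : R) : R :=
  match fuel with
  | O => z
  | S n => z + sum1 I (fun j =>
             if Nat.ltb i j then 2 * INR (j - i) * pb j (gamma_f I pb n j z)
             else 0)
  end.

Definition gamma (I : nat) (pb : nat -> R -> R) (i : nat) (z : R) : R :=
  gamma_f I pb (I - i) i z.

Definition Gamma (I : nat) (pb : nat -> R -> R) : nat -> R -> R :=
  fun i z => pb i (gamma I pb i (invR (gamma I pb 0) z)).

(* Main.v *)
Require Import Defs.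
From Stdlib Require Import Reals Lra Lia ClassicalEpsilon Arith Wf_nat.
Open Scope R_scope.

Lemma sum1_ext n f g : (forall j, (1 <= j <= n)%nat -> f j = g j) -> sum1 n f = sum1 n g.
Proof.
  induction n; intros H; simpl; auto.
  rewrite IHn by (intros; apply H; lia). rewrite (H (S n)) by lia. reflexivity.
Qed.

Lemma sum1_plus n f g : sum1 n (fun j => f j + g j) = sum1 n f + sum1 n g.
Proof. induction n; simpl; [lra|rewrite IHn; lra]. Qed.

Lemma sum1_zero n : sum1 n (fun _ => 0) = 0.
Proof. induction n; simpl; [lra|rewrite IHn; lra]. Qed.

Lemma sum1_le n f g : (forall j, (1 <= j <= n)%nat -> f j <= g j) -> sum1 n f <= sum1 n g.
Proof.
  induction n; intros H; simpl; [lra|].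
  assert (sum1 n f <= sum1 n g) by (apply IHn; intros; apply H; lia).
  assert (f (S n) <= g (S n)) by (apply H; lia). lra.
Qed.

Lemma cont_plus f g : cont_Rplus f -> cont_Rplus g -> cont_Rplus (fun u => f u + g u).
Proof.
  intros Hf Hg x Hx eps He.
  destruct (Hf x Hx (eps/2)) as [d1 [Hd1 H1]]; [lra|].
  destruct (Hg x Hx (eps/2)) as [d2 [Hd2 H2]]; [lra|].
  exists (Rmin d1 d2); split; [apply Rmin_pos; auto|].
  intros y Hy Hyx.
  assert (A1 := H1 y Hy (Rlt_le_trans _ _ _ Hyx (Rmin_l _ _))).
  assert (A2 := H2 y Hy (Rlt_le_trans _ _ _ Hyx (Rmin_r _ _))).
  apply Rabs_def2 in A1; apply Rabs_def2 in A2. apply Rabs_def1; lra.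
Qed.

Lemma cont_const c : cont_Rplus (fun _ => c).
Proof.
  intros x Hx eps He. exists 1; split; [lra|]. intros. 
  replace (c - c) with 0 by ring. rewrite Rabs_R0; lra.
Qed.

Lemma cont_id : cont_Rplus (fun u => u).
Proof. intros x Hx eps He. exists eps; split; auto. Qed.

Lemma cont_scal c f : cont_Rplus f -> cont_Rplus (fun u => c * f u).
Proof.
  intros Hf x Hx eps He.
  destruct (Hf x Hx (eps / (Rabs c + 1))) as [d [Hd H]].
  { apply Rdiv_lt_0_compat; auto. pose proof (Rabs_pos c); lra. }
  exists d; split; auto. intros y Hy Hyx.
  replace (c * f y - c * f x) with (c * (f y - f x)) by ring.
  rewrite Rabs_mult. specialize (H y Hy Hyx).
  pose proof (Rabs_pos c). pose proof (Rabs_pos (f y - f x)).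
  assert (Rabs (f y - f x) * (Rabs c + 1) < eps).
  { apply (Rmult_lt_compat_r (Rabs c + 1)) in H; [|lra].
    unfold Rdiv in H. rewrite Rmult_assoc, Rinv_l in H; lra. }
  nra.
Qed.

Lemma cont_comp f g : cont_Rplus f -> cont_Rplus g -> (forall x, 0 <= x -> 0 <= g x) ->
  cont_Rplus (fun u => f (g u)).
Proof.
  intros Hf Hg Hp x Hx eps He.
  destruct (Hf (g x) (Hp x Hx) eps He) as [d1 [Hd1 H1]].
  destruct (Hg x Hx d1 Hd1) as [d2 [Hd2 H2]].
  exists d2; split; auto.
Qed.

Lemma cont_ext f g : cont_Rplus f -> (forall u, 0 <= u -> g u = f u) -> cont_Rplus g.
Proof.
  intros Hf E x Hx eps He. destruct (Hf x Hx eps He) as [d [Hd H]].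
  exists d; split; auto. intros y Hy Hyx. rewrite !E by auto. auto.
Qed.

Lemma inC_zero : inC (fun _ => 0).
Proof. repeat split; intros; try lra. apply cont_const. Qed.

Lemma inC_scal c f : 0 <= c -> inC f -> inC (fun u => c * f u).
Proof.
  intros Hc [Hf [Hp [H0 Hm]]]. repeat split.
  - apply cont_scal; auto.
  - intros. specialize (Hp x H). nra.
  - rewrite H0; ring.
  - intros. specialize (Hm x y H H1). nra.
Qed.

Lemma inC_plus f g : inC f -> inC g -> inC (fun u => f u + g u).
Proof.
  intros [Hf [Hp [H0 Hm]]] [Hf' [Hp' [H0' Hm']]]. repeat split.
  - apply cont_plus; auto.
  - intros. specialize (Hp x H). specialize (Hp' x H). lra.
  - rewrite H0, H0'; ring.
  - intros. specialize (Hm x y H H1). specialize (Hm' x y H H1). lra.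
Qed.

Lemma inC_sum n F : (forall j, (1 <= j <= n)%nat -> inC (F j)) ->
  inC (fun u => sum1 n (fun j => F j u)).
Proof.
  induction n; intros H; simpl.
  - apply inC_zero.
  - apply (inC_plus (fun u => sum1 n (fun j => F j u)) (F (S n))).
    + apply IHn; intros; apply H; lia.
    + apply H; lia.
Qed.

Lemma inC_comp f g : inC f -> inC g -> inC (fun u => f (g u)).
Proof.
  intros [Hf [Hp [H0 Hm]]] [Hf' [Hp' [H0' Hm']]]. repeat split.
  - apply cont_comp; auto.
  - intros. apply Hp, Hp'; auto.
  - rewrite H0', H0; auto.
  - intros. apply Hm; auto.
Qed.

Lemma inCup_inC f : inCup f -> inC f.
Proof. intros [H _]; exact H. Qed.

Lemma inCup_id : inCup (fun u => u).
Proof.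
  repeat split; intros; auto; try lra. apply cont_id.
  exists (M + 1). intros; lra.
Qed.

Lemma inCup_plus f g : inCup f -> inC g -> inCup (fun u => f u + g u).
Proof.
  intros [Hf [Hs Hu]] Hg. pose proof Hg as [_ [Hp' [_ Hm']]]. split; [apply inC_plus; auto|split].
  - intros. pose proof (Hs x y H H0). pose proof (Hm' x y H (Rlt_le _ _ H0)). lra.
  - intros M. destruct (Hu M) as [N HN]. exists (Rmax N 0). intros u Hu'.
    pose proof (Rmax_l N 0). pose proof (Rmax_r N 0).
    pose proof (HN u ltac:(lra)). pose proof (Hp' u ltac:(lra)). lra.
Qed.

Lemma inCup_ext f g : inCup f -> (forall u, 0 <= u -> g u = f u) -> inCup g.
Proof.
  intros [[Hc [Hp [H0 Hm]]] [Hs Hu]] E. repeat split.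
  - eapply cont_ext; eauto.
  - intros; rewrite E; auto.
  - rewrite E by lra; auto.
  - intros; rewrite !E by lra; auto.
  - intros; rewrite !E by lra; auto.
  - intros M. destruct (Hu M) as [N HN]. exists (Rmax N 0). intros u Hu'.
    pose proof (Rmax_l N 0). pose proof (Rmax_r N 0).
    rewrite E by lra. apply HN; lra.
Qed.

Lemma invR_f_f f v : (forall x y, 0 <= x -> x < y -> f x < f y) -> 0 <= v -> invR f (f v) = v.
Proof.
  intros Hs Hv. unfold invR.
  destruct (epsilon_spec (inhabits 0) (fun w => 0 <= w /\ f w = f v)) as [Hw E].
  { exists v; auto. }
  set (w := epsilon _ _) in *.
  destruct (Rtotal_order w v) as [H|[H|H]]; auto.
  - pose proof (Hs w v Hw H); lra.
  - pose proof (Hs v w Hv H); lra.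
Qed.

Lemma invR_unique f u v : (forall x y, 0 <= x -> x < y -> f x < f y) -> 0 <= v -> f v = u -> invR f u = v.
Proof. intros Hs Hv E. subst u. apply invR_f_f; auto. Qed.

Lemma Rmax_lip x y : Rabs (Rmax 0 y - Rmax 0 x) <= Rabs (y - x).
Proof.
  unfold Rmax; destruct (Rle_dec 0 y); destruct (Rle_dec 0 x); unfold Rabs;
  repeat destruct Rcase_abs; lra.
Qed.

Lemma inCup_surj f u : inCup f -> 0 <= u -> exists v, 0 <= v /\ f v = u.
Proof.
  intros [[Hc [Hp [H0 Hm]]] [Hs Hu]] Hu0.
  destruct (Hu u) as [N HN].
  set (b := Rmax N 1).
  assert (Hb1 : 1 <= b) by apply Rmax_r.
  assert (Hb : u < f b) by (apply HN; apply Rmax_l).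
  set (h := fun x => f (Rmax 0 x) - u).
  assert (Hh : continuity h).
  { intros x. unfold continuity_pt, continue_in, limit1_in, limit_in. simpl. unfold R_dist.
    intros eps He. destruct (Hc (Rmax 0 x) (Rmax_l _ _) eps He) as [d [Hd H]].
    exists d; split; auto. intros y [_ Hy]. unfold h.
    replace (f (Rmax 0 y) - u - (f (Rmax 0 x) - u)) with (f (Rmax 0 y) - f (Rmax 0 x)) by ring.
    apply H; [apply Rmax_l|]. eapply Rle_lt_trans; [apply Rmax_lip|exact Hy]. }
  destruct (IVT_cor h 0 b Hh ltac:(lra)) as [z [Hz Ez]].
  { unfold h. rewrite Rmax_left by lra. rewrite (Rmax_right 0 b) by lra. rewrite H0. nra. }
  exists z; split; [lra|]. unfold h in Ez. rewrite Rmax_right in Ez by lra. lra.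
Qed.

Lemma invR_spec f u : inCup f -> 0 <= u -> 0 <= invR f u /\ f (invR f u) = u.
Proof.
  intros Hf Hu. unfold invR. apply epsilon_spec. apply inCup_surj; auto.
Qed.

Lemma inCup_inv f : inCup f -> inCup (invR f).
Proof.
  intros Hf. pose proof Hf as [[Hc [Hp [H0 Hm]]] [Hs Hu]].
  assert (Sp := fun u Hu => invR_spec f u Hf Hu).
  assert (Mono : forall x y, 0 <= x -> x <= y -> invR f x <= invR f y).
  { intros x y Hx Hxy. destruct (Sp x Hx) as [A1 B1]. destruct (Sp y ltac:(lra)) as [A2 B2].
    destruct (Rle_lt_dec (invR f x) (invR f y)); auto.
    pose proof (Hs _ _ A2 r). lra. }
  repeat split.
  - intros u Hu0 eps He. destruct (Sp u Hu0) as [Av Bv]. set (v := invR f u) in *.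
    assert (Hup : u < f (v + eps)) by (rewrite <- Bv at 1; apply Hs; lra).
    destruct (Rlt_le_dec (v - eps) 0) as [Hl|Hl].
    + exists (f (v + eps) - u); split; [lra|].
      intros y Hy Hyx. apply Rabs_def2 in Hyx. destruct (Sp y Hy) as [Ay By].
      apply Rabs_def1.
      * destruct (Rlt_le_dec (invR f y) (v + eps)); [lra|].
        pose proof (Hm (v + eps) (invR f y) ltac:(lra) r). lra.
      * lra.
    + assert (Hlo : f (v - eps) < u) by (rewrite <- Bv; apply Hs; lra).
      exists (Rmin (f (v + eps) - u) (u - f (v - eps))); split; [apply Rmin_pos; lra|].
      intros y Hy Hyx.
      pose proof (Rmin_l (f (v + eps) - u) (u - f (v - eps))).
      pose proof (Rmin_r (f (v + eps) - u) (u - f (v - eps))).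
      apply Rabs_def2 in Hyx. destruct (Sp y Hy) as [Ay By].
      apply Rabs_def1.
      * destruct (Rlt_le_dec (invR f y) (v + eps)); [lra|].
        pose proof (Hm (v + eps) (invR f y) ltac:(lra) r). lra.
      * destruct (Rlt_le_dec (v - eps) (invR f y)); [lra|].
        pose proof (Hm _ _ Ay r). lra.
  - intros; apply Sp; auto.
  - apply invR_unique; auto; lra.
  - auto.
  - intros x y Hx Hxy. destruct (Sp x Hx) as [A1 B1]. destruct (Sp y ltac:(lra)) as [A2 B2].
    destruct (Rlt_le_dec (invR f x) (invR f y)); auto.
    pose proof (Hm _ _ A2 r). lra.
  - intros M. exists (f (Rmax M 0 + 1)). intros u HuN.
    pose proof (Rmax_l M 0). pose proof (Rmax_r M 0).
    assert (Hu0 : 0 <= u) by (pose proof (Hp (Rmax M 0 + 1) ltac:(lra)); lra).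
    destruct (Sp u Hu0) as [Au Bu].
    destruct (Rlt_le_dec M (invR f u)); auto.
    pose proof (Hs (invR f u) (Rmax M 0 + 1) Au ltac:(lra)). lra.
Qed.

Section Main.
Variable I : nat.

Lemma gamma_f_fuel pb z : forall n m i, (I - i <= n)%nat -> (I - i <= m)%nat ->
  gamma_f I pb n i z = gamma_f I pb m i z.
Proof.
  induction n; intros m i Hn Hm.
  - destruct m; simpl; auto.
    rewrite (sum1_ext _ _ (fun _ => 0)); [rewrite sum1_zero; ring|].
    intros j Hj. destruct (Nat.ltb_spec i j); auto; lia.
  - destruct m; simpl.
    + rewrite (sum1_ext _ _ (fun _ => 0)); [rewrite sum1_zero; ring|].
      intros j Hj. destruct (Nat.ltb_spec i j); auto; lia.
    + f_equal. apply sum1_ext. intros j Hj. destruct (Nat.ltb_spec i j); auto.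
      rewrite (IHn m j) by lia. reflexivity.
Qed.

Lemma gamma_eq pb i z : gamma I pb i z =
  z + sum1 I (fun j => if Nat.ltb i j then 2 * INR (j - i) * pb j (gamma I pb j z) else 0).
Proof.
  unfold gamma. destruct (I - i)%nat eqn:E; simpl.
  - rewrite (sum1_ext _ _ (fun _ => 0)); [rewrite sum1_zero; ring|].
    intros j Hj. destruct (Nat.ltb_spec i j); auto; lia.
  - f_equal. apply sum1_ext. intros j Hj. destruct (Nat.ltb_spec i j); auto.
    rewrite (gamma_f_fuel pb z n (I - j) j) by lia. reflexivity.
Qed.

Lemma gamma_I pb z : gamma I pb I z = z.
Proof. unfold gamma. rewrite Nat.sub_diag. reflexivity. Qed.

Lemma phi_decomp psi i u : phi I psi i u = phi I psi I u +
  sum1 I (fun j => if Nat.ltb i j then 2 * INR (j - i) * psi j u else 0).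
Proof.
  unfold phi.
  assert (sum1 I (fun j => 2 * INR (Nat.min I j) * psi j u) =
    sum1 I (fun j => 2 * INR (Nat.min i j) * psi j u) +
    sum1 I (fun j => if Nat.ltb i j then 2 * INR (j - i) * psi j u else 0)).
  { rewrite <- sum1_plus. apply sum1_ext. intros j Hj.
    rewrite (Nat.min_r I j) by lia.
    destruct (Nat.ltb_spec i j).
    - rewrite Nat.min_l by lia. rewrite minus_INR by lia. ring.
    - rewrite Nat.min_r by lia. ring. }
  rewrite H. ring.
Qed.

Lemma phi_0 psi u : phi I psi 0 u = u.
Proof.
  unfold phi. rewrite (sum1_ext _ _ (fun _ => 0)); [rewrite sum1_zero; ring|].
  intros j Hj. simpl. ring.
Qed.

Lemma phi_inCup psi i : inF I psi -> inCup (phi I psi i).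
Proof.
  intros [HC HI].
  apply (inCup_ext (fun u => phi I psi I u +
     sum1 I (fun j => if Nat.ltb i j then 2 * INR (j - i) * psi j u else 0))).
  - apply inCup_plus; auto.
    apply (inC_sum I (fun j u => if Nat.ltb i j then 2 * INR (j - i) * psi j u else 0)).
    intros j Hj. destruct (Nat.ltb i j).
    + apply inC_scal; [pose proof (pos_INR (j - i)); lra| apply HC; auto].
    + apply inC_zero.
  - intros; apply phi_decomp.
Qed.

Lemma smono f : inCup f -> forall x y, 0 <= x -> x < y -> f x < f y.
Proof. intros [_ [H _]]; exact H. Qed.

Lemma part1_gamma psi (HF : inF I psi) : forall k i, (I - i = k)%nat -> forall u, 0 <= u ->
  gamma I (Upsilon I psi) i (phi I psi I u) = phi I psi i u.
Proof.
  intros k. induction k as [k IH] using lt_wf_ind. intros i Hk u Hu.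
  rewrite gamma_eq, (phi_decomp psi i u). f_equal.
  apply sum1_ext. intros j Hj. destruct (Nat.ltb_spec i j); auto.
  rewrite (IH (I - j)%nat ltac:(lia) j eq_refl u Hu).
  unfold Upsilon. rewrite invR_f_f; auto. apply smono, phi_inCup; auto.
Qed.

Lemma part1 psi : inF I psi ->
     inCI I (Upsilon I psi) /\ eqCI I (Gamma I (Upsilon I psi)) psi.
Proof.
  intros HF. split.
  - intros i Hi. unfold Upsilon. apply inC_comp; [apply HF; auto|].
    apply inCup_inC, inCup_inv, phi_inCup; auto.
  - intros i Hi z Hz. unfold Gamma.
    assert (HPI := phi_inCup psi I HF).
    assert (Hg : forall u, 0 <= u -> gamma I (Upsilon I psi) 0 (phi I psi I u) = u).
    { intros u Hu. rewrite (part1_gamma psi HF _ 0 eq_refl u Hu). apply phi_0. }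
    assert (E : invR (gamma I (Upsilon I psi) 0) z = phi I psi I z).
    { unfold invR.
      destruct (epsilon_spec (inhabits 0) (fun v => 0 <= v /\ gamma I (Upsilon I psi) 0 v = z))
        as [Hw Ew].
      { exists (phi I psi I z). split; auto. apply HPI; auto. }
      set (w := epsilon _ _) in *.
      destruct (invR_spec _ w HPI Hw) as [A B].
      rewrite <- B in Ew. rewrite Hg in Ew by auto. rewrite <- B, Ew. reflexivity. }
    rewrite E, (part1_gamma psi HF _ i eq_refl z Hz).
    unfold Upsilon. rewrite invR_f_f; auto. apply smono, phi_inCup; auto.
Qed.

Lemma gamma_inCup pb : inCI I pb -> forall k i, (I - i = k)%nat -> inCup (gamma I pb i).
Proof.
  intros HC k. induction k as [k IH] using lt_wf_ind. intros i Hk.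
  apply (inCup_ext (fun z => z + sum1 I (fun j => if Nat.ltb i j then 2 * INR (j - i) * pb j (gamma I pb j z) else 0))).
  - apply inCup_plus; [apply inCup_id|].
    apply (inC_sum I (fun j z => if Nat.ltb i j then 2 * INR (j - i) * pb j (gamma I pb j z) else 0)).
    intros j Hj. destruct (Nat.ltb_spec i j).
    + apply inC_scal; [pose proof (pos_INR (j - i)); lra|].
      apply (inC_comp (pb j) (gamma I pb j)); [apply HC; auto|].
      apply inCup_inC, (IH (I - j)%nat ltac:(lia) j eq_refl).
    + apply inC_zero.
  - intros; apply gamma_eq.
Qed.

Lemma part2 pb : inCI I pb ->
     inF I (Gamma I pb) /\ eqCI I (Upsilon I (Gamma I pb)) pb.
Proof.
  intros HC.
  assert (HG : forall i, inCup (gamma I pb i)) by (intros i; apply (gamma_inCup pb HC _ i eq_refl)).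
  assert (HG0i := inCup_inv _ (HG 0%nat)).
  assert (Inv0 : forall z, 0 <= z -> invR (gamma I pb 0) (gamma I pb 0 z) = z).
  { intros; apply invR_f_f; auto. apply smono; auto. }
  assert (Hci : inCI I (Gamma I pb)).
  { intros i Hi. unfold Gamma.
    apply (inC_comp (pb i) (fun z => gamma I pb i (invR (gamma I pb 0) z))); [apply HC; auto|].
    apply inC_comp; apply inCup_inC; auto. }
  assert (Key : forall i z, 0 <= z -> phi I (Gamma I pb) i (gamma I pb 0 z) = gamma I pb i z).
  { intros i z Hz. unfold phi, Gamma.
    rewrite (sum1_ext _ _ (fun j => 2 * INR (Nat.min i j) * pb j (gamma I pb j z)))
      by (intros; rewrite Inv0; auto).
    rewrite (gamma_eq pb 0 z), (gamma_eq pb i z).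
    assert (sum1 I (fun j => if Nat.ltb 0 j then 2 * INR (j - 0) * pb j (gamma I pb j z) else 0) =
       sum1 I (fun j => 2 * INR (Nat.min i j) * pb j (gamma I pb j z)) +
       sum1 I (fun j => if Nat.ltb i j then 2 * INR (j - i) * pb j (gamma I pb j z) else 0)).
    { rewrite <- sum1_plus. apply sum1_ext. intros j Hj.
      destruct (Nat.ltb_spec 0 j); [|lia]. rewrite Nat.sub_0_r.
      destruct (Nat.ltb_spec i j).
      - rewrite Nat.min_l by lia. rewrite minus_INR by lia. ring.
      - rewrite Nat.min_r by lia. ring. }
    rewrite H. ring. }
  assert (HF : inF I (Gamma I pb)).
  { split; auto. apply (inCup_ext _ _ HG0i). intros u Hu.
    destruct (invR_spec _ u (HG 0%nat) Hu) as [A B].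
    rewrite <- B at 1. rewrite Key by auto. apply gamma_I. }
  split; auto.
  intros i Hi u Hu. unfold Upsilon.
  destruct (invR_spec _ u (HG i) Hu) as [A B].
  rewrite (invR_unique _ u (gamma I pb 0 (invR (gamma I pb i) u))).
  - unfold Gamma. rewrite Inv0 by auto. rewrite B. reflexivity.
  - apply smono, phi_inCup; auto.
  - apply (HG 0%nat); auto.
  - rewrite Key; auto.
Qed.

End Main.

Theorem proposition3p7 (I : nat) :
  (forall psi : nat -> R -> R, inF I psi ->
     inCI I (Upsilon I psi) /\ eqCI I (Gamma I (Upsilon I psi)) psi) /\
  (forall pb : nat -> R -> R, inCI I pb ->
     inF I (Gamma I pb) /\ eqCI I (Upsilon I (Gamma I pb)) pb).
Proof. split; [apply part1|apply part2]. Qed.
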